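(* Let $p$ be a prime. If $\{a^1,\ldots,a^n\}\subseteq \mathbb{Z}^m$ is a $p$-adic generating set for a cone, then it is a $p$-adic generating set for a subspace.
   Context: A $p$-adic rational is a number $a/p^k$ with $a,k\in\mathbb{Z}$, $k\ge0$. A finite set $S\subseteq\mathbb{Z}^m$ is a $p$-adic generating set for a cone if every integral vector in the conic hull of $S$ is a conic combination of the elements of $S$ with $p$-adic coefficients; it is a $p$-adic generating set for a subspace if every integral vector in the linear hull of $S$ is a linear combination of the elements of $S$ with $p$-adic coefficients. *)

(* Defs.v *)
From HB Require Import structures.
From mathcomp Require Import all_boot all_order all_algebra.
From mathcomp Require Import reals.
Set Implicit Arguments. Unset Strict Implicit. Unset Printing Implicit Defensive.
Import Order.TTheory GRing.Theory Num.Theory.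
Local Open Scope ring_scope.

Definition p_adic (p : nat) (q : rat) : Prop :=
  exists (a : int) (k : nat), q = a%:~R / (p%:R ^+ k).

Definition in_cone (R : realType) (m n : nat) (a : 'I_n -> 'rV[int]_m)
    (x : 'rV[int]_m) : Prop :=
  exists lam : 'I_n -> R, (forall i, 0 <= lam i) /\
    map_mx intr x = \sum_(i < n) lam i *: map_mx intr (a i).

Definition in_span (R : realType) (m n : nat) (a : 'I_n -> 'rV[int]_m)
    (x : 'rV[int]_m) : Prop :=
  exists lam : 'I_n -> R,
    map_mx intr x = \sum_(i < n) lam i *: map_mx intr (a i).

Definition padic_gen_cone (R : realType) (p m n : nat)
    (a : 'I_n -> 'rV[int]_m) : Prop :=
  forall x : 'rV[int]_m, in_cone R a x ->
    exists lam : 'I_n -> rat, (forall i, 0 <= lam i /\ p_adic p (lam i)) /\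
      map_mx intr x = \sum_(i < n) lam i *: map_mx intr (a i).

Definition padic_gen_subspace (R : realType) (p m n : nat)
    (a : 'I_n -> 'rV[int]_m) : Prop :=
  forall x : 'rV[int]_m, in_span R a x ->
    exists lam : 'I_n -> rat, (forall i, p_adic p (lam i)) /\
      map_mx intr x = \sum_(i < n) lam i *: map_mx intr (a i).

(* Main.v *)
Require Import Defs.
From HB Require Import structures.
From mathcomp Require Import all_boot all_order all_algebra.
From mathcomp Require Import reals.
Import Order.TTheory GRing.Theory Num.Theory.
Local Open Scope ring_scope.

Lemma map_intr_z (F : numFieldType) m n (a : 'I_n -> 'rV[int]_m) x (N : nat) :
  map_mx (intr : int -> F) (x + \sum_i (a i) *+ N) =
  map_mx intr x + \sum_i N%:R *: map_mx intr (a i).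
Proof.
apply/rowP => j; rewrite !mxE !summxE rmorphD /= rmorph_sum; congr (_ + _).
by apply: eq_bigr => i _; rewrite !mxE mulmxnE rmorphMn mulr_natl.
Qed.

Theorem proposition3p3 (R : realType) (p m n : nat) (a : 'I_n -> 'rV[int]_m) :
  prime p -> padic_gen_cone R p a -> padic_gen_subspace R p a.
Proof.
move=> pr Hc x [lam Hx].
pose N := Num.bound (\sum_i `|lam i|).
have HN : forall i, - lam i <= N%:R.
  move=> i; have H0 : 0 <= \sum_i `|lam i| by apply: sumr_ge0.
  apply: le_trans (ltW (archi_boundP H0)).
  apply: le_trans (ler_norm _) _; rewrite normrN.
  rewrite (bigD1 i) //= lerDl; exact: sumr_ge0.
have Hz : in_cone R a (x + \sum_i (a i) *+ N).
  exists (fun i => lam i + N%:R); split.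
    by move=> i; rewrite -lerBlDr sub0r lerNl.
  by rewrite (@map_intr_z R) Hx -big_split /=; apply: eq_bigr => i _; rewrite scalerDl.
have [mu [Hmu Hz']] := Hc _ Hz.
exists (fun i => mu i - N%:R); split.
  move=> i; have [_ [b [k ->]]] := Hmu i.
  exists (b - (N * p ^ k)%N%:Z), k.
  have pk : (p%:R ^+ k : rat) != 0 by rewrite expf_neq0 // pnatr_eq0 -lt0n prime_gt0.
  apply: (mulIf pk); rewrite mulrBl !divfK // rmorphB /=; congr (_ - _); by rewrite -[RHS]/((N * p ^ k)%N%:R) natrM natrX.

move: Hz'; rewrite (@map_intr_z rat) => /(congr1 (fun v => v - \sum_i N%:R *: map_mx intr (a i))).
rewrite addrK => ->; rewrite -sumrB; apply: eq_bigr => i _; by rewrite scalerBl.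
Qed.
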